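(* Let $A$ be a separable unital C*-algebra with many asymptotically central elements, and let $\mathcal U$ be a nonprincipal ultrafilter on $\mathbb N$. Then $A'\cap A^{\mathcal U}$ and $A^{\mathcal U}$ both have density character $\mathfrak c$ and cardinality $\mathfrak c$.
   Context: A C*-algebra $A$ has many asymptotically central elements if there is $\delta>0$ such that for every $n\in\mathbb N$, every finite $F\subset A$ and every $\varepsilon>0$ there are $a_1,\dots,a_n\in A$ of norm at most $1$ with $\|a_i-a_j\|\ge\delta$ for $1\le i<j\le n$ and $\|a_ib-ba_i\|\le\varepsilon$ for all $i$ and $b\in F$. $A^{\mathcal U}$ is the C*-ultrapower, $A\subset A^{\mathcal U}$ diagonally, $A'\cap A^{\mathcal U}$ the relative commutant. Density character is the least cardinality of a dense subset; $\mathfrak c$ is the cardinality of $\mathbb R$. *)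

(* Defs.v *)
From Stdlib Require Import Reals Lra.
Open Scope R_scope.

Record Cpx : Type := mkCpx { Cre : R; Cim : R }.
Definition Cadd (z w : Cpx) : Cpx := mkCpx (Cre z + Cre w) (Cim z + Cim w).
Definition Cmul (z w : Cpx) : Cpx :=
  mkCpx (Cre z * Cre w - Cim z * Cim w) (Cre z * Cim w + Cim z * Cre w).
Definition Cconj (z : Cpx) : Cpx := mkCpx (Cre z) (- Cim z).
Definition Cabs (z : Cpx) : R := sqrt (Cre z * Cre z + Cim z * Cim z).
Definition C1 : Cpx := mkCpx 1 0.

Record CStarAlg : Type := {
  car :> Type;
  a0 : car;
  a1 : car;
  aadd : car -> car -> car;
  aopp : car -> car;
  amul : car -> car -> car;
  ascal : Cpx -> car -> car;
  astar : car -> car;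
  anorm : car -> R;
  aaddA : forall x y z, aadd x (aadd y z) = aadd (aadd x y) z;
  aaddC : forall x y, aadd x y = aadd y x;
  aadd0 : forall x, aadd x a0 = x;
  aaddN : forall x, aadd x (aopp x) = a0;
  ascal1 : forall x, ascal C1 x = x;
  ascalA : forall c d x, ascal c (ascal d x) = ascal (Cmul c d) x;
  ascalDr : forall c x y, ascal c (aadd x y) = aadd (ascal c x) (ascal c y);
  ascalDl : forall c d x, ascal (Cadd c d) x = aadd (ascal c x) (ascal d x);
  amulA : forall x y z, amul x (amul y z) = amul (amul x y) z;
  amulDl : forall x y z, amul (aadd x y) z = aadd (amul x z) (amul y z);
  amulDr : forall x y z, amul x (aadd y z) = aadd (amul x y) (amul x z);
  amul_scall : forall c x y, amul (ascal c x) y = ascal c (amul x y);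
  amul_scalr : forall c x y, amul x (ascal c y) = ascal c (amul x y);
  amul1l : forall x, amul a1 x = x;
  amul1r : forall x, amul x a1 = x;
  astarK : forall x, astar (astar x) = x;
  astarD : forall x y, astar (aadd x y) = aadd (astar x) (astar y);
  astar_scal : forall c x, astar (ascal c x) = ascal (Cconj c) (astar x);
  astarM : forall x y, astar (amul x y) = amul (astar y) (astar x);
  anorm_ge0 : forall x, 0 <= anorm x;
  anorm_eq0 : forall x, anorm x = 0 -> x = a0;
  anorm_triangle : forall x y, anorm (aadd x y) <= anorm x + anorm y;
  anorm_scal : forall c x, anorm (ascal c x) = Cabs c * anorm x;
  anorm_subm : forall x y, anorm (amul x y) <= anorm x * anorm y;
  anorm_cstar : forall x, anorm (amul (astar x) x) = anorm x * anorm x;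
  acomplete : forall u : nat -> car,
    (forall eps, eps > 0 -> exists N, forall m n, (N <= m)%nat -> (N <= n)%nat ->
        anorm (aadd (u m) (aopp (u n))) < eps) ->
    exists l, forall eps, eps > 0 -> exists N, forall n, (N <= n)%nat ->
        anorm (aadd (u n) (aopp l)) < eps
}.

Arguments a0 {c0}. Arguments a1 {c0}. Arguments aadd {c0}. Arguments aopp {c0}.
Arguments amul {c0}. Arguments ascal {c0}. Arguments astar {c0}. Arguments anorm {c0}.

Definition adist {A : CStarAlg} (x y : A) : R := anorm (aadd x (aopp y)).
Definition acomm {A : CStarAlg} (x y : A) : A := aadd (amul x y) (aopp (amul y x)).

Definition separable (A : CStarAlg) : Prop :=
  exists d : nat -> A, forall (x : A) (eps : R), eps > 0 ->
    exists k, adist x (d k) < eps.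

(** many asymptotically central elements (the a_1..a_n are indexed by i < n) *)
Definition many_asymp_central (A : CStarAlg) : Prop :=
  exists delta : R, delta > 0 /\
    forall (n : nat) (F : list A) (eps : R), eps > 0 ->
      exists a : nat -> A,
        (forall i, (i < n)%nat -> anorm (a i) <= 1) /\
        (forall i j, (i < j)%nat -> (j < n)%nat -> adist (a i) (a j) >= delta) /\
        (forall i b, (i < n)%nat -> List.In b F -> anorm (acomm (a i) b) <= eps).

Definition is_ultrafilter (U : (nat -> Prop) -> Prop) : Prop :=
  U (fun _ => True) /\
  ~ U (fun _ => False) /\
  (forall P Q : nat -> Prop, U P -> (forall n, P n -> Q n) -> U Q) /\
  (forall P Q : nat -> Prop, U P -> U Q -> U (fun n => P n /\ Q n)) /\
  (forall P : nat -> Prop, U P \/ U (fun n => ~ P n)).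

Definition nonprincipal (U : (nat -> Prop) -> Prop) : Prop :=
  forall k : nat, ~ U (fun n => n = k).

Definition ulim (U : (nat -> Prop) -> Prop) (f : nat -> R) (L : R) : Prop :=
  forall eps, eps > 0 -> U (fun n => Rabs (f n - L) < eps).

(** * The C*-ultrapower A^U: bounded sequences modulo U-null sequences.
    An element is an equivalence class, represented as a predicate on
    sequences. *)
Definition bdd_seq {A : CStarAlg} (x : nat -> A) : Prop :=
  exists M, forall n, anorm (x n) <= M.

Definition uequiv {A : CStarAlg} (U : (nat -> Prop) -> Prop) (x y : nat -> A) : Prop :=
  ulim U (fun n => adist (x n) (y n)) 0.

Definition UPow (A : CStarAlg) (U : (nat -> Prop) -> Prop) : Type :=
  { P : (nat -> A) -> Prop |
      exists x, bdd_seq x /\ forall y, P y <-> (bdd_seq y /\ uequiv U x y) }.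

Definition urep {A U} (p : UPow A U) (x : nat -> A) : Prop := proj1_sig p x.

Definition udist {A U} (p q : UPow A U) (r : R) : Prop :=
  exists x y, urep p x /\ urep q y /\ ulim U (fun n => adist (x n) (y n)) r.

(** relative commutant A' ∩ A^U (A embedded diagonally) *)
Definition relcomm {A U} (p : UPow A U) : Prop :=
  forall (b : A) (x : nat -> A), urep p x ->
    ulim U (fun n => anorm (acomm (x n) b)) 0.

Definition card_eq_c {X : Type} (S : X -> Prop) : Prop :=
  exists f : R -> {x | S x},
    (forall r s, f r = f s -> r = s) /\ (forall y, exists r, f r = y).

Definition card_ge_c {X : Type} (S : X -> Prop) : Prop :=
  exists f : R -> {x | S x}, forall r s, f r = f s -> r = s.

Definition dense_in {X : Type} (d : X -> X -> R -> Prop) (S D : X -> Prop) : Prop :=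
  (forall x, D x -> S x) /\
  (forall x, S x -> forall eps, eps > 0 -> exists y r, D y /\ d x y r /\ r < eps).

Definition density_char_c {X : Type} (d : X -> X -> R -> Prop) (S : X -> Prop) : Prop :=
  (exists D, dense_in d S D /\ card_eq_c D) /\
  (forall D, dense_in d S D -> card_ge_c D).

(* Main.v *)
Require Import Defs.
From Stdlib Require Import Reals Lra Lia ZArith List Classical ClassicalEpsilon FunctionalExtensionality PropExtensionality ProofIrrelevance.
From Stdlib Require Cantor.
Open Scope R_scope.

Section SB.
Variables (X Y : Type) (f : X -> Y) (g : Y -> X).
Hypothesis finj : forall a b, f a = f b -> a = b.
Hypothesis ginj : forall a b, g a = g b -> a = b.

Fixpoint Cn (n : nat) (x : X) : Prop :=
  match n with
  | O => ~ exists y, g y = x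
  | S n => exists x', Cn n x' /\ g (f x') = x
  end.
Definition inC x := exists n, Cn n x.

Lemma notC_img x : ~ inC x -> exists y, g y = x.
Proof. intros H. apply NNPP; intro H'. apply H. exists O. exact H'. Qed.

Definition hSB (x : X) : Y :=
  match excluded_middle_informative (inC x) with
  | left _ => f x
  | right H => proj1_sig (constructive_indefinite_description _ (notC_img x H))
  end.

Lemma hSB_inj a b : hSB a = hSB b -> a = b.
Proof.
  unfold hSB.
  destruct (excluded_middle_informative (inC a)) as [Ha|Ha];
  destruct (excluded_middle_informative (inC b)) as [Hb|Hb].
  - apply finj.
  - destruct (constructive_indefinite_description _ _) as [y Hy]; simpl.
    intro E. exfalso. apply Hb. destruct Ha as [n Hn]. exists (S n). simpl.
    exists a. split; auto. rewrite E; auto.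
  - destruct (constructive_indefinite_description _ _) as [y Hy]; simpl.
    intro E. exfalso. apply Ha. destruct Hb as [n Hn]. exists (S n). simpl.
    exists b. split; auto. rewrite <- E; auto.
  - destruct (constructive_indefinite_description _ (notC_img a Ha)) as [y Hy]; simpl.
    destruct (constructive_indefinite_description _ (notC_img b Hb)) as [z Hz]; simpl.
    intro E. subst. reflexivity.
Qed.

Lemma hSB_surj y : exists x, hSB x = y.
Proof.
  destruct (classic (inC (g y))) as [H|H].
  - destruct H as [n Hn]. destruct n as [|n].
    + simpl in Hn. exfalso. apply Hn. exists y. reflexivity.
    + simpl in Hn. destruct Hn as [x' [Hx' E]]. apply ginj in E.
      exists x'. unfold hSB. destruct (excluded_middle_informative (inC x')) as [_|N].
      * exact E.
      * exfalso. apply N. exists n. exact Hx'.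
  - exists (g y). unfold hSB. destruct (excluded_middle_informative (inC (g y))) as [N|N].
    + contradiction.
    + destruct (constructive_indefinite_description _ (notC_img (g y) N)) as [z Hz]; simpl.
      apply ginj; exact Hz.
Qed.
End SB.

Lemma SB_exists (X Y : Type) (f : X -> Y) (g : Y -> X) :
  (forall a b, f a = f b -> a = b) -> (forall a b, g a = g b -> a = b) ->
  exists h : X -> Y, (forall a b, h a = h b -> a = b) /\ (forall y, exists x, h x = y).
Proof.
  intros Hf Hg. exists (hSB X Y f g). split.
  - apply hSB_inj; auto.
  - apply hSB_surj; auto.
Qed.

Definition rat_of (n : nat) : R :=
  let (a, b) := Cantor.of_nat n in
  let (c, e) := Cantor.of_nat b in (INR a - INR c) / (INR e + 1).

Definition rbits (r : R) : nat -> bool :=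
  fun n => if Rlt_dec (rat_of n) r then true else false.

Lemma IZR_split (z : Z) : IZR z = INR (Z.to_nat z) - INR (Z.to_nat (- z)).
Proof.
  rewrite !INR_IZR_INZ. destruct (Z_le_gt_dec 0 z).
  - rewrite Z2Nat.id by lia. replace (Z.to_nat (-z)) with O by lia. simpl. lra.
  - replace (Z.to_nat z) with O by lia. rewrite Z2Nat.id by lia. simpl.
    rewrite opp_IZR. lra.
Qed.

Lemma rat_between (r s : R) : r < s -> exists n, r < rat_of n < s.
Proof.
  intros Hrs.
  destruct (archimed (/ (s - r))) as [H1 _].
  set (e := Z.to_nat (up (/ (s - r)))).
  assert (He : / (s - r) < INR e + 1).
  { unfold e. destruct (Z_le_gt_dec 0 (up (/ (s-r)))).
    - rewrite INR_IZR_INZ, Z2Nat.id by lia. lra.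
    - replace (Z.to_nat _) with O by lia. simpl.
      apply Rlt_trans with (IZR (up (/ (s - r)))); auto.
      apply Rlt_trans with 0; [|lra]. apply IZR_lt; lia. }
  assert (Hpos : 0 < INR e + 1) by (pose proof (pos_INR e); lra).
  set (z := up (r * (INR e + 1))).
  destruct (archimed (r * (INR e + 1))) as [Hz1 Hz2]. fold z in Hz1, Hz2.
  exists (Cantor.to_nat (Z.to_nat z, Cantor.to_nat (Z.to_nat (-z), e))).
  unfold rat_of. rewrite !Cantor.cancel_of_to. rewrite <- IZR_split.
  split.
  - apply Rmult_lt_reg_r with (INR e + 1); auto.
    unfold Rdiv. rewrite Rmult_assoc, Rinv_l by lra. lra.
  - assert (Hk : (s - r) * (INR e + 1) > 1).
    { assert (0 < s - r) by lra.
      apply Rmult_lt_compat_l with (r := s - r) in He; auto.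
      rewrite Rinv_r in He; lra. }
    apply Rmult_lt_reg_r with (INR e + 1); auto.
    unfold Rdiv. rewrite Rmult_assoc, Rinv_l by lra. nra.
Qed.

Lemma rbits_inj r s : rbits r = rbits s -> r = s.
Proof.
  intros E. destruct (Rtotal_order r s) as [H|[H|H]]; auto; exfalso.
  - destruct (rat_between r s H) as [n Hn].
    assert (E' := f_equal (fun h => h n) E). simpl in E'. unfold rbits in E'.
    destruct (Rlt_dec (rat_of n) r); destruct (Rlt_dec (rat_of n) s); try discriminate; lra.
  - destruct (rat_between s r H) as [n Hn].
    assert (E' := f_equal (fun h => h n) E). simpl in E'. unfold rbits in E'.
    destruct (Rlt_dec (rat_of n) r); destruct (Rlt_dec (rat_of n) s); try discriminate; lra.
Qed.

Definition wt (b : nat -> bool) (n : nat) : R := if b n then / 3 ^ n else 0.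
Fixpoint ps (b : nat -> bool) (N : nat) : R :=
  match N with O => 0 | S N => ps b N + wt b N end.

Lemma pow3_pos n : 0 < 3 ^ n.
Proof. apply pow_lt; lra. Qed.

Lemma wt_bounds b n : 0 <= wt b n <= / 3 ^ n.
Proof.
  unfold wt. pose proof (pow3_pos n). destruct (b n).
  - split; [left; apply Rinv_0_lt_compat|]; lra.
  - split; [lra|]. left; apply Rinv_0_lt_compat; lra.
Qed.

Lemma ps_bound b N : ps b N <= 3/2 - 3 * (/ 3 ^ N) / 2.
Proof.
  induction N; simpl.
  - lra.
  - pose proof (wt_bounds b N). pose proof (pow3_pos N).
    rewrite Rinv_mult. assert (0 < / 3 ^ N) by (apply Rinv_0_lt_compat; lra). lra.
Qed.

Lemma ps_cv b : { l | Un_cv (ps b) l }.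
Proof.
  apply growing_cv.
  - intro n. simpl. pose proof (wt_bounds b n). lra.
  - exists (3/2). intros x [i ->]. pose proof (ps_bound b i).
    pose proof (pow3_pos i). assert (0 < / 3 ^ i) by (apply Rinv_0_lt_compat; lra). lra.
Qed.

Definition bits2R (b : nat -> bool) : R := proj1_sig (ps_cv b).

Lemma ps_agree b c k : (forall n, (n < k)%nat -> b n = c n) -> ps b k = ps c k.
Proof.
  induction k; intros H; simpl; auto.
  rewrite IHk by (intros; apply H; lia). unfold wt. rewrite H by lia. reflexivity.
Qed.
Lemma ps_gap b c k : (forall n, (n < k)%nat -> b n = c n) -> b k = true -> c k = false ->
  forall j, ps b (S k + j) - ps c (S k + j) >= / 3 ^ k / 2 + / 3 ^ (k + j) / 2.
Proof.
  intros H Hb Hc j. induction j.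
  - rewrite !Nat.add_0_r. change (ps b (S k)) with (ps b k + wt b k).
    change (ps c (S k)) with (ps c k + wt c k).
    rewrite (ps_agree b c k H). unfold wt. rewrite Hb, Hc. lra.
  - replace (S k + S j)%nat with (S (S k + j)) by lia.
    change (ps b (S (S k + j))) with (ps b (S k + j) + wt b (S k + j)).
    change (ps c (S (S k + j))) with (ps c (S k + j) + wt c (S k + j)).
    pose proof (wt_bounds b (S k + j)). pose proof (wt_bounds c (S k + j)).
    replace (k + S j)%nat with (S k + j)%nat in * by lia.
    replace (S k + j)%nat with (S (k + j)) in * by lia.
    rewrite <- !tech_pow_Rmult in *. rewrite Rinv_mult in *.
    pose proof (pow3_pos (k + j)). assert (0 < / 3 ^ (k + j)) by (apply Rinv_0_lt_compat; lra).
    lra.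
Qed.

Lemma lim_ge (u : nat -> R) l a N : Un_cv u l -> (forall n, (n >= N)%nat -> u n >= a) -> l >= a.
Proof.
  intros Hu Ha. apply Rnot_lt_ge. intro Hl.
  destruct (Hu (a - l)) as [M HM]; [lra|].
  specialize (HM (max M N) ltac:(lia)). specialize (Ha (max M N) ltac:(lia)).
  unfold Rdist in HM. apply Rabs_def2 in HM. lra.
Qed.

Lemma least_diff (b c : nat -> bool) : b <> c ->
  exists k, b k <> c k /\ forall n, (n < k)%nat -> b n = c n.
Proof.
  intros H.
  assert (Hex : exists k, b k <> c k).
  { apply NNPP; intro N. apply H. apply functional_extensionality. intro x.
    apply NNPP; intro N'. apply N. exists x; exact N'. }
  destruct Hex as [k Hk].
  induction k as [k IH] using (well_founded_induction lt_wf).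
  destruct (classic (forall n, (n < k)%nat -> b n = c n)) as [A|A].
  - exists k; auto.
  - apply NNPP; intro N. apply A. intros n Hn. apply NNPP; intro Hbn.
    apply N. apply (IH n Hn Hbn).
Qed.

Lemma bits2R_gt b c k : (forall n, (n < k)%nat -> b n = c n) -> b k = true -> c k = false ->
  bits2R b - bits2R c >= / 3 ^ k / 2.
Proof.
  intros H Hb Hc. unfold bits2R.
  destruct (ps_cv b) as [lb Hlb]. destruct (ps_cv c) as [lc Hlc]. simpl.
  apply (lim_ge (fun n => ps b n - ps c n) _ _ (S k)).
  - apply CV_minus; auto.
  - intros n Hn. replace n with (S k + (n - S k))%nat by lia.
    pose proof (ps_gap b c k H Hb Hc (n - S k)).
    pose proof (pow3_pos (k + (n - S k))).
    assert (0 < / 3 ^ (k + (n - S k))) by (apply Rinv_0_lt_compat; lra). lra.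
Qed.

Lemma bits2R_inj b c : bits2R b = bits2R c -> b = c.
Proof.
  intros E. apply NNPP; intro N. destruct (least_diff b c N) as [k [Hk Hlt]].
  pose proof (pow3_pos k). assert (0 < / 3 ^ k) by (apply Rinv_0_lt_compat; lra).
  destruct (b k) eqn:Eb; destruct (c k) eqn:Ec; try congruence.
  - pose proof (bits2R_gt b c k Hlt Eb Ec). lra.
  - assert (Hlt' : forall n, (n < k)%nat -> c n = b n) by (intros; symmetry; auto).
    pose proof (bits2R_gt c b k Hlt' Ec Eb). lra.
Qed.

Section Alg.
Variable A : CStarAlg.
Implicit Types x y z u v w : A.

Lemma aadd0l x : aadd a0 x = x.
Proof. rewrite aaddC. apply aadd0. Qed.
Lemma aaddNl x : aadd (aopp x) x = a0.
Proof. rewrite aaddC. apply aaddN. Qed.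

Lemma aadd_cancel_l u x y : aadd u x = aadd u y -> x = y.
Proof.
  intro E. rewrite <- (aadd0l x), <- (aadd0l y), <- (aaddNl u), <- !aaddA, E. reflexivity.
Qed.

Lemma opp_unique x y : aadd x y = a0 -> y = aopp x.
Proof. intro E. apply (aadd_cancel_l x). rewrite E, aaddN. reflexivity. Qed.

Lemma aoppK x : aopp (aopp x) = x.
Proof. symmetry. apply opp_unique. apply aaddNl. Qed.

Lemma aoppD x y : aopp (aadd x y) = aadd (aopp x) (aopp y).
Proof.
  symmetry. apply opp_unique.
  rewrite (aaddC _ (aopp x)), aaddA, <- (aaddA _ x y), aaddN, aadd0, aaddN. reflexivity.
Qed.

Lemma aopp0 : aopp (a0 : A) = a0.
Proof. symmetry. apply opp_unique. apply aadd0. Qed.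

Lemma amul0r x : amul x a0 = a0.
Proof.
  apply (aadd_cancel_l (amul x a0)). rewrite <- amulDr, !aadd0. reflexivity.
Qed.
Lemma amul0l x : amul a0 x = a0.
Proof.
  apply (aadd_cancel_l (amul a0 x)). rewrite <- amulDl, !aadd0. reflexivity.
Qed.
Lemma amulNr x y : amul x (aopp y) = aopp (amul x y).
Proof. apply opp_unique. rewrite <- amulDr, aaddN. apply amul0r. Qed.
Lemma amulNl x y : amul (aopp x) y = aopp (amul x y).
Proof. apply opp_unique. rewrite <- amulDl, aaddN. apply amul0l. Qed.

Lemma ascal0 x : ascal (mkCpx 0 0) x = a0.
Proof.
  apply (aadd_cancel_l (ascal (mkCpx 0 0) x)). rewrite <- ascalDl, aadd0.
  unfold Cadd; simpl. rewrite Rplus_0_l. reflexivity.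
Qed.

Lemma aopp_scal x : aopp x = ascal (mkCpx (-1) 0) x.
Proof.
  symmetry. apply opp_unique. rewrite <- (ascal1 A x) at 1. rewrite <- ascalDl.
  unfold Cadd, C1; simpl. replace (1 + -1) with 0 by ring. rewrite Rplus_0_l. apply ascal0.
Qed.

Lemma anorm0 : anorm (a0 : A) = 0.
Proof.
  rewrite <- (ascal0 a0), anorm_scal. unfold Cabs; simpl.
  replace (0 * 0 + 0 * 0) with 0 by ring. rewrite sqrt_0. ring.
Qed.

Lemma anorm_opp x : anorm (aopp x) = anorm x.
Proof.
  rewrite aopp_scal, anorm_scal. unfold Cabs; simpl.
  replace (-1 * -1 + 0 * 0) with 1 by ring. rewrite sqrt_1. ring.
Qed.

Lemma adist_triangle x y z : adist x z <= adist x y + adist y z.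
Proof.
  unfold adist. replace (aadd x (aopp z)) with (aadd (aadd x (aopp y)) (aadd y (aopp z))).
  - apply anorm_triangle.
  - rewrite aaddA, <- (aaddA _ x), aaddNl, aadd0. reflexivity.
Qed.

Lemma adist_sym x y : adist x y = adist y x.
Proof.
  unfold adist. rewrite <- anorm_opp, aoppD, aoppK, aaddC. reflexivity.
Qed.

Lemma adist_xx x : adist x x = 0.
Proof. unfold adist. rewrite aaddN. apply anorm0. Qed.

Lemma adist_ge0 x y : 0 <= adist x y.
Proof. apply anorm_ge0. Qed.

Lemma adist_eq0 x y : adist x y = 0 -> x = y.
Proof.
  unfold adist. intro H. apply anorm_eq0 in H.
  rewrite <- (aadd0 _ y), <- H, aaddC, <- aaddA, aaddNl, aadd0. reflexivity.
Qed.

Lemma anorm_le_dist x y : anorm x <= anorm y + adist x y.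
Proof.
  unfold adist. replace x with (aadd y (aadd x (aopp y))) at 1.
  - apply anorm_triangle.
  - rewrite (aaddC _ x), aaddA, aaddN, aadd0l. reflexivity.
Qed.

Lemma anorm_mul_dist_r x b d : adist (amul x b) (amul x d) <= anorm x * adist b d.
Proof. unfold adist. rewrite <- amulNr, <- amulDr. apply anorm_subm. Qed.
Lemma anorm_mul_dist_l x b d : adist (amul b x) (amul d x) <= adist b d * anorm x.
Proof. unfold adist. rewrite <- amulNl, <- amulDl. apply anorm_subm. Qed.

Lemma adist_sub u v u' v' :
  adist (aadd u (aopp v)) (aadd u' (aopp v')) <= adist u u' + adist v v'.
Proof.
  unfold adist.
  replace (aadd (aadd u (aopp v)) (aopp (aadd u' (aopp v'))))
    with (aadd (aadd u (aopp u')) (aadd v' (aopp v))).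
  - eapply Rle_trans; [apply anorm_triangle|].
    pose proof (adist_sym v v') as S. unfold adist in S. rewrite S. apply Rle_refl.
  - rewrite aoppD, aoppK.
    rewrite <- !aaddA. f_equal.
    rewrite (aaddC _ (aopp v)), <- !aaddA. f_equal.
Qed.

Lemma acomm_dist_r x b d : adist (acomm x b) (acomm x d) <= 2 * anorm x * adist b d.
Proof.
  unfold acomm. eapply Rle_trans; [apply adist_sub|].
  pose proof (anorm_mul_dist_r x b d). pose proof (anorm_mul_dist_l x b d). lra.
Qed.

Lemma acomm_bound_r x b d : anorm (acomm x b) <= anorm (acomm x d) + 2 * anorm x * adist b d.
Proof.
  pose proof (anorm_le_dist (acomm x b) (acomm x d)). pose proof (acomm_dist_r x b d).
  lra.
Qed.

Lemma acomm_swap x y : anorm (acomm x y) = anorm (acomm y x).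
Proof.
  unfold acomm. rewrite <- anorm_opp, aoppD, aoppK, aaddC. reflexivity.
Qed.

End Alg.

Section UF.
Variable U : (nat -> Prop) -> Prop.
Hypothesis HU : is_ultrafilter U.

Lemma U_true : U (fun _ => True).
Proof. apply HU. Qed.
Lemma U_mono (P Q : nat -> Prop) : U P -> (forall n, P n -> Q n) -> U Q.
Proof. apply HU. Qed.
Lemma U_and (P Q : nat -> Prop) : U P -> U Q -> U (fun n => P n /\ Q n).
Proof. apply HU. Qed.
Lemma U_ex (P : nat -> Prop) : U P -> exists n, P n.
Proof.
  intro H. apply NNPP; intro N. destruct HU as [_ [Hf _]]. apply Hf.
  apply (U_mono P); auto. intros n Hn. apply N. exists n; auto.
Qed.
Lemma U_ult (P : nat -> Prop) : U P \/ U (fun n => ~ P n).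
Proof. apply HU. Qed.

Hypothesis HnP : nonprincipal U.
Lemma U_cofin k : U (fun n => (k <= n)%nat).
Proof.
  induction k.
  - apply (U_mono _ _ U_true). intros; lia.
  - destruct (U_ult (fun n => n = k)) as [H|H].
    + exfalso. apply (HnP k H).
    + apply (U_mono _ _ (U_and _ _ IHk H)). intros n [H1 H2]. lia.
Qed.
End UF.

Section UP.
Variable A : CStarAlg.
Variable U : (nat -> Prop) -> Prop.
Hypothesis HU : is_ultrafilter U.

Lemma uequiv_refl (x : nat -> A) : uequiv U x x.
Proof.
  intros eps He. apply (U_mono U HU _ _ (U_true U HU)). intros n _.
  rewrite adist_xx, Rminus_0_r, Rabs_R0. lra.
Qed.

Lemma uequiv_sym (x y : nat -> A) : uequiv U x y -> uequiv U y x.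
Proof.
  intros H eps He. apply (U_mono U HU _ _ (H eps He)). intros n. rewrite adist_sym. auto.
Qed.

Lemma uequiv_lt (x y : nat -> A) eps : uequiv U x y -> eps > 0 -> U (fun n => adist (x n) (y n) < eps).
Proof.
  intros H He. apply (U_mono U HU _ _ (H eps He)). intros n Hn.
  rewrite Rminus_0_r in Hn. pose proof (adist_ge0 A (x n) (y n)).
  rewrite Rabs_right in Hn; lra.
Qed.

Lemma uequiv_of_lt (x y : nat -> A) : (forall eps, eps > 0 -> U (fun n => adist (x n) (y n) < eps)) -> uequiv U x y.
Proof.
  intros H eps He. apply (U_mono U HU _ _ (H eps He)). intros n Hn.
  rewrite Rminus_0_r. pose proof (adist_ge0 A (x n) (y n)). rewrite Rabs_right; lra.
Qed.

Lemma uequiv_trans (x y z : nat -> A) : uequiv U x y -> uequiv U y z -> uequiv U x z.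
Proof.
  intros H1 H2. apply uequiv_of_lt. intros eps He.
  apply (U_mono U HU _ _ (U_and U HU _ _ (uequiv_lt _ _ (eps/2) H1 ltac:(lra)) (uequiv_lt _ _ (eps/2) H2 ltac:(lra)))).
  intros n [Ha Hb]. pose proof (adist_triangle A (x n) (y n) (z n)). lra.
Qed.

Definition mkcls (x : nat -> A) (Hb : bdd_seq x) : UPow A U :=
  exist _ (fun y => bdd_seq y /\ uequiv U x y) (ex_intro _ x (conj Hb (fun y => iff_refl _))).

Lemma urep_mkcls x Hb y : urep (mkcls x Hb) y <-> bdd_seq y /\ uequiv U x y.
Proof. reflexivity. Qed.

Lemma urep_char (p : UPow A U) x : urep p x -> forall y, urep p y <-> bdd_seq y /\ uequiv U x y.
Proof.
  destruct p as [P [w [Hw HP]]]. unfold urep; simpl. intros Hx y.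
  rewrite HP in Hx |- *. destruct Hx as [Hbx Hwx]. split.
  - intros [Hb Hwy]. split; auto. apply (uequiv_trans _ w); auto. apply uequiv_sym; auto.
  - intros [Hb Hxy]. split; auto. apply (uequiv_trans _ x); auto.
Qed.

Lemma urep_bdd (p : UPow A U) x : urep p x -> bdd_seq x.
Proof. intro H. apply (proj1 (urep_char p x H x) H). Qed.

Lemma urep_exists (p : UPow A U) : exists x, urep p x.
Proof.
  destruct p as [P [w [Hw HP]]]. exists w. unfold urep; simpl. apply HP. split; auto.
  apply uequiv_refl.
Qed.

Lemma upow_eq (p q : UPow A U) x : urep p x -> urep q x -> p = q.
Proof.
  intros Hp Hq.
  assert (E : proj1_sig p = proj1_sig q).
  { apply functional_extensionality. intro y. apply propositional_extensionality.
    pose proof (urep_char p x Hp y). pose proof (urep_char q x Hq y).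
    unfold urep in *. tauto. }
  destruct p as [P HP]; destruct q as [Q HQ]. simpl in E. subst Q.
  f_equal. apply proof_irrelevance.
Qed.

Lemma urep_uequiv (p : UPow A U) x y : urep p x -> urep p y -> uequiv U x y.
Proof. intros Hx Hy. apply (urep_char p x Hx y); auto. Qed.

Definition rep_of (p : UPow A U) : nat -> A :=
  proj1_sig (constructive_indefinite_description _ (urep_exists p)).
Lemma rep_of_spec p : urep p (rep_of p).
Proof. unfold rep_of. destruct (constructive_indefinite_description _ _); auto. Qed.

Variable d : nat -> A.
Hypothesis Hd : forall (x : A) (eps : R), eps > 0 -> exists k, adist x (d k) < eps.

Definition upow_bits (p : UPow A U) : nat -> bool :=
  fun n => let (i, r) := Cantor.of_nat n in let (m, k) := Cantor.of_nat r in
    if Rlt_dec (adist (rep_of p i) (d k)) (/ INR (S m)) then true else false.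

Lemma small_zero a : 0 <= a -> (forall m, a < 2 * / INR (S m)) -> a = 0.
Proof.
  intros H0 H. destruct H0 as [Hp|]; auto. exfalso.
  destruct (archimed_cor1 (a / 2)) as [N [HN HN0]]; [lra|].
  destruct N as [|m]; [lia|]. specialize (H m). lra.
Qed.

Lemma upow_bits_inj p q : upow_bits p = upow_bits q -> p = q.
Proof.
  intros E.
  assert (Hx : rep_of p = rep_of q).
  { apply functional_extensionality. intro i. apply adist_eq0. apply small_zero.
    - apply adist_ge0.
    - intro m. assert (Hpos : / INR (S m) > 0).
      { apply Rinv_0_lt_compat. apply lt_0_INR. lia. }
      destruct (Hd (rep_of p i) (/ INR (S m)) Hpos) as [k Hk].
      assert (E' := f_equal (fun h => h (Cantor.to_nat (i, Cantor.to_nat (m, k)))) E).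
      cbv beta in E'. unfold upow_bits in E'. rewrite !Cantor.cancel_of_to in E'.
      destruct (Rlt_dec (adist (rep_of p i) (d k)) (/ INR (S m))) as [_|N]; [|contradiction].
      destruct (Rlt_dec (adist (rep_of q i) (d k)) (/ INR (S m))) as [Hq|N]; [|discriminate].
      pose proof (adist_triangle A (rep_of p i) (d k) (rep_of q i)).
      rewrite (adist_sym A (d k)) in H. lra. }
  apply (upow_eq p q (rep_of p)). apply rep_of_spec. rewrite Hx. apply rep_of_spec.
Qed.

End UP.

Fixpoint code (s : nat -> bool) (m : nat) : nat :=
  match m with O => O | S m => (2 * code s m + (if s m then 1 else 0))%nat end.

Lemma code_lt s m : (code s m < 2 ^ m)%nat.
Proof. induction m; simpl; [lia|]. destruct (s m); lia. Qed.

Lemma code_diff s t k m : s k <> t k -> (k < m)%nat -> code s m <> code t m.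
Proof.
  intros H. induction m; intros Hk; [lia|]. simpl.
  destruct (Nat.eq_dec k m) as [->|Hne].
  - destruct (s m), (t m); try congruence; lia.
  - assert (code s m <> code t m) by (apply IHm; lia).
    destruct (s m), (t m); lia.
Qed.

Section Fam.
Variable A : CStarAlg.
Variable U : (nat -> Prop) -> Prop.
Hypothesis HU : is_ultrafilter U.
Hypothesis HnP : nonprincipal U.
Variable d : nat -> A.
Hypothesis Hd : forall (x : A) (eps : R), eps > 0 -> exists k, adist x (d k) < eps.
Variable delta : R.
Hypothesis Hdelta : delta > 0.
Variable fam : nat -> nat -> A.
Hypothesis Hf1 : forall m i, (i < 2 ^ m)%nat -> anorm (fam m i) <= 1.
Hypothesis Hf2 : forall m i j, (i < j)%nat -> (j < 2 ^ m)%nat -> adist (fam m i) (fam m j) >= delta.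
Hypothesis Hf3 : forall m i j, (i < 2 ^ m)%nat -> (j <= m)%nat ->
  anorm (acomm (fam m i) (d j)) <= / INR (S m).

Definition xs (s : nat -> bool) : nat -> A := fun m => fam m (code s m).

Lemma xs_bdd s : bdd_seq (xs s).
Proof. exists 1. intro n. apply Hf1, code_lt. Qed.

Lemma xs_sep s t k m : s k <> t k -> (k < m)%nat -> adist (xs s m) (xs t m) >= delta.
Proof.
  intros H Hk. pose proof (code_diff s t k m H Hk). unfold xs.
  pose proof (code_lt s m). pose proof (code_lt t m).
  destruct (Nat.lt_gt_cases (code s m) (code t m)) as [[Hl|Hl] _]; auto.
  - rewrite adist_sym. apply Hf2; auto.
Qed.

Definition cls (s : nat -> bool) : UPow A U := mkcls A U (xs s) (xs_bdd s).

Lemma xs_comm s b eps : eps > 0 -> U (fun n => anorm (acomm (xs s n) b) < eps).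
Proof.
  intros He. destruct (Hd b (eps / 8)) as [j Hj]; [lra|].
  destruct (archimed_cor1 (eps / 4)) as [N [HN HN0]]; [lra|].
  apply (U_mono U HU _ _ (U_cofin U HU HnP (max j N))). intros n Hn.
  pose proof (acomm_bound_r A (xs s n) b (d j)).
  assert (anorm (acomm (xs s n) (d j)) <= / INR (S n)) by (apply Hf3; [apply code_lt|lia]).
  assert (/ INR (S n) <= / INR N).
  { apply Rinv_le_contravar. apply lt_0_INR; lia. apply le_INR; lia. }
  assert (anorm (xs s n) <= 1) by (apply Hf1, code_lt).
  pose proof (anorm_ge0 A (xs s n)). pose proof (adist_ge0 A b (d j)).
  assert (anorm (xs s n) * adist b (d j) <= 1 * (eps / 8)) by (apply Rmult_le_compat; lra).
  lra.
Qed.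

Lemma cls_relcomm s : relcomm (cls s).
Proof.
  intros b y Hy. apply (proj1 (urep_mkcls A U _ _ _)) in Hy. destruct Hy as [_ Hy].
  intros eps He.
  assert (Hc : 0 < 4 * (anorm b + 1)) by (pose proof (anorm_ge0 A b); lra).
  apply (U_mono U HU _ _ (U_and U HU _ _ (xs_comm s b (eps/2) ltac:(lra))
     (uequiv_lt A U HU _ _ (eps / (4 * (anorm b + 1))) Hy ltac:(apply Rdiv_lt_0_compat; lra)))).
  intros n [H1 H2]. rewrite Rminus_0_r, Rabs_right by (apply Rle_ge, anorm_ge0).
  rewrite acomm_swap. pose proof (acomm_bound_r A b (y n) (xs s n)).
  rewrite acomm_swap in H1. rewrite adist_sym in H2.
  pose proof (anorm_ge0 A b). pose proof (adist_ge0 A (y n) (xs s n)).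
  assert (anorm b * adist (y n) (xs s n) <= anorm b * (eps / (4 * (anorm b + 1)))).
  { apply Rmult_le_compat_l; lra. }
  assert (anorm b * (eps / (4 * (anorm b + 1))) <= eps / 4).
  { set (q := eps / (4 * (anorm b + 1))).
    assert (Hq : q * (4 * (anorm b + 1)) = eps) by (unfold q; field; lra).
    assert (0 < q) by (unfold q; apply Rdiv_lt_0_compat; lra). nra. }
  lra.
Qed.

Lemma cls_inj s t : cls s = cls t -> s = t.
Proof.
  intros E. apply NNPP; intro N. destruct (least_diff s t N) as [k [Hk _]].
  assert (Ht : urep (cls t) (xs t)) by (apply (proj2 (urep_mkcls A U _ _ _)); split; [apply xs_bdd|apply uequiv_refl; auto]).
  rewrite <- E in Ht. apply (proj1 (urep_mkcls A U _ _ _)) in Ht. destruct Ht as [_ Ht].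
  destruct (U_ex U HU _ (U_and U HU _ _ (uequiv_lt A U HU _ _ delta Ht Hdelta) (U_cofin U HU HnP (S k)))) as [n [H1 H2]].
  pose proof (xs_sep s t k n Hk H2). lra.
Qed.

Lemma dense_ge (Sp D : UPow A U -> Prop) : (forall s, Sp (cls s)) -> dense_in (@udist A U) Sp D -> card_ge_c D.
Proof.
  intros HS [HDS HD].
  assert (Hpick : forall r : R, exists y : {y | D y}, exists r', udist (cls (rbits r)) (proj1_sig y) r' /\ r' < delta / 3).
  { intro r. destruct (HD (cls (rbits r)) (HS _) (delta / 3) ltac:(lra)) as [y [r' [Hy [Hu Hr]]]].
    exists (exist _ y Hy). exists r'. auto. }
  exists (fun r => proj1_sig (constructive_indefinite_description _ (Hpick r))).
  intros r t E.
  destruct (constructive_indefinite_description _ (Hpick r)) as [y1 [r1 [Hu1 Hr1]]].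
  destruct (constructive_indefinite_description _ (Hpick t)) as [y2 [r2 [Hu2 Hr2]]].
  simpl in E. subst y2.
  apply rbits_inj. apply NNPP; intro N. destruct (least_diff _ _ N) as [k [Hk _]].
  destruct Hu1 as [x1 [z1 [Hx1 [Hz1 L1]]]].
  destruct Hu2 as [x2 [z2 [Hx2 [Hz2 L2]]]].
  apply (proj1 (urep_mkcls A U _ _ _)) in Hx1. apply (proj1 (urep_mkcls A U _ _ _)) in Hx2. destruct Hx1 as [_ Hx1]. destruct Hx2 as [_ Hx2].
  pose proof (urep_uequiv A U HU _ _ _ Hz1 Hz2) as Hz.
  set (e := delta / 24).
  assert (He : e > 0) by (unfold e; lra).
  pose proof (uequiv_lt A U HU _ _ e Hx1 He) as U1.
  pose proof (uequiv_lt A U HU _ _ e Hx2 He) as U2.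
  pose proof (uequiv_lt A U HU _ _ e Hz He) as U3.
  pose proof (L1 e He) as U4. pose proof (L2 e He) as U5.
  pose proof (U_cofin U HU HnP (S k)) as U6.
  destruct (U_ex U HU _ (U_and U HU _ _ U1 (U_and U HU _ _ U2 (U_and U HU _ _ U3
     (U_and U HU _ _ U4 (U_and U HU _ _ U5 U6)))))) as [n [V1 [V2 [V3 [V4 [V5 V6]]]]]].
  pose proof (xs_sep _ _ k n Hk V6) as Sep.
  apply Rabs_def2 in V4. apply Rabs_def2 in V5.
  pose proof (adist_triangle A (xs (rbits r) n) (x1 n) (xs (rbits t) n)).
  pose proof (adist_triangle A (x1 n) (z1 n) (xs (rbits t) n)).
  pose proof (adist_triangle A (z1 n) (z2 n) (xs (rbits t) n)).
  pose proof (adist_triangle A (z2 n) (x2 n) (xs (rbits t) n)).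
  rewrite (adist_sym A (z2 n) (x2 n)) in *. rewrite (adist_sym A (x2 n) (xs (rbits t) n)) in *.
  unfold e in *. lra.
Qed.

End Fam.

Section Fin.
Variable A : CStarAlg.
Variable U : (nat -> Prop) -> Prop.
Hypothesis HU : is_ultrafilter U.
Hypothesis HnP : nonprincipal U.
Variable d : nat -> A.
Hypothesis Hd : forall (x : A) (eps : R), eps > 0 -> exists k, adist x (d k) < eps.
Variable delta : R.
Hypothesis Hdelta : delta > 0.
Variable fam : nat -> nat -> A.
Hypothesis Hf1 : forall m i, (i < 2 ^ m)%nat -> anorm (fam m i) <= 1.
Hypothesis Hf2 : forall m i j, (i < j)%nat -> (j < 2 ^ m)%nat -> adist (fam m i) (fam m j) >= delta.
Hypothesis Hf3 : forall m i j, (i < 2 ^ m)%nat -> (j <= m)%nat ->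
  anorm (acomm (fam m i) (d j)) <= / INR (S m).

Lemma card_from (Sp : UPow A U -> Prop) : (forall s, Sp (cls A U fam Hf1 s)) -> card_eq_c Sp.
Proof.
  intros HS.
  destruct (SB_exists R {x | Sp x}
    (fun r => exist _ (cls A U fam Hf1 (rbits r)) (HS _))
    (fun p => bits2R (upow_bits A U HU d (proj1_sig p)))) as [h [Hh1 Hh2]].
  - intros a b E. apply (f_equal (@proj1_sig _ _)) in E. simpl in E.
    apply rbits_inj. apply (cls_inj A U HU HnP delta Hdelta fam Hf1 Hf2); auto.
  - intros [p Hp] [q Hq] E. simpl in E. apply bits2R_inj in E.
    apply (upow_bits_inj A U HU d Hd) in E. subst q. f_equal. apply proof_irrelevance.
  - exists h. split; auto.
Qed.

Lemma dens_from (Sp : UPow A U -> Prop) : (forall s, Sp (cls A U fam Hf1 s)) -> density_char_c (@udist A U) Sp.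
Proof.
  intros HS. split.
  - exists Sp. split; [split|].
    + auto.
    + intros x Hx eps He. exists x, 0. split; auto. split; [|lra].
      destruct (urep_exists A U HU x) as [x0 Hx0]. exists x0, x0. split; auto. split; auto.
      intros e Ee. apply (U_mono U HU _ _ (U_true U HU)). intros n _.
      rewrite adist_xx. rewrite Rminus_0_r, Rabs_R0. lra.
    + apply card_from; auto.
  - intros D HD. apply (dense_ge A U HU HnP delta Hdelta fam Hf1 Hf2 Sp D); auto.
Qed.

End Fin.

Theorem mainTheorem14 :
  forall (A : CStarAlg) (U : (nat -> Prop) -> Prop),
    separable A -> many_asymp_central A ->
    is_ultrafilter U -> nonprincipal U ->
    (density_char_c (@udist A U) (@relcomm A U) /\ card_eq_c (@relcomm A U)) /\
    (density_char_c (@udist A U) (fun _ => True) /\ card_eq_c (fun _ : UPow A U => True)).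
Proof.
  intros A U [d Hd] [delta [Hdelta Hm]] HU HnP.
  assert (Hex : forall m : nat, exists a : nat -> A,
    (forall i, (i < 2 ^ m)%nat -> anorm (a i) <= 1) /\
    (forall i j, (i < j)%nat -> (j < 2 ^ m)%nat -> adist (a i) (a j) >= delta) /\
    (forall i b, (i < 2 ^ m)%nat -> In b (map d (seq 0 (S m))) -> anorm (acomm (a i) b) <= / INR (S m))).
  { intro m. apply Hm. apply Rinv_0_lt_compat, lt_0_INR. lia. }
  set (fam := fun m => proj1_sig (constructive_indefinite_description _ (Hex m))).
  assert (Hf : forall m, let a := fam m in
    (forall i, (i < 2 ^ m)%nat -> anorm (a i) <= 1) /\
    (forall i j, (i < j)%nat -> (j < 2 ^ m)%nat -> adist (a i) (a j) >= delta) /\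
    (forall i b, (i < 2 ^ m)%nat -> In b (map d (seq 0 (S m))) -> anorm (acomm (a i) b) <= / INR (S m))).
  { intro m. unfold fam. destruct (constructive_indefinite_description _ (Hex m)); auto. }
  assert (Hf1 : forall m i, (i < 2 ^ m)%nat -> anorm (fam m i) <= 1) by (intros m; apply (Hf m)).
  assert (Hf2 : forall m i j, (i < j)%nat -> (j < 2 ^ m)%nat -> adist (fam m i) (fam m j) >= delta)
    by (intros m; apply (Hf m)).
  assert (Hf3 : forall m i j, (i < 2 ^ m)%nat -> (j <= m)%nat ->
    anorm (acomm (fam m i) (d j)) <= / INR (S m)).
  { intros m i j Hi Hj. apply (Hf m); auto. apply in_map, in_seq. lia. }
  assert (HR : forall s, relcomm (cls A U fam Hf1 s))
    by (intro s; apply (cls_relcomm A U HU HnP d Hd fam Hf1 Hf3)).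
  split; split.
  - apply (dens_from A U HU HnP d Hd delta Hdelta fam Hf1 Hf2); auto.
  - apply (card_from A U HU HnP d Hd delta Hdelta fam Hf1 Hf2); auto.
  - apply (dens_from A U HU HnP d Hd delta Hdelta fam Hf1 Hf2); auto.
  - apply (card_from A U HU HnP d Hd delta Hdelta fam Hf1 Hf2); auto.
Qed.
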